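(* For each $N$, let $(\Sigma_t)_{t\ge0}$ be a time-homogeneous Markov chain on a finite state space and $V$ a real function on that space. Suppose there are constants $V_{\max},\bar\eta,\gamma,C,C',K>0$ independent of $N$ such that for all $N$ and all $t\ge0$, almost surely: $0\le V(\Sigma_t)\le V_{\max}$; if $V(\Sigma_t)>\bar\eta$ then $\mathbb E[V(\Sigma_{t+1})-V(\Sigma_t)\mid\Sigma_t]\le-\gamma$ and $\mathbb E[(V(\Sigma_{t+1})-V(\Sigma_t))^+\mid\Sigma_t]\le K/\sqrt N$; if $\bar\eta/2<V(\Sigma_t)\le\bar\eta$ then $\mathbb E[(V(\Sigma_{t+1})-V(\Sigma_t))^+\mid\Sigma_t]\le Ke^{-CN}$; if $V(\Sigma_t)\le\bar\eta/2$ then $\mathbb P(V(\Sigma_{t+1})>\bar\eta/2\mid\Sigma_t)\le Ke^{-C'N}$. Then there are constants $C''>0$, $K''$ independent of $N$ such that for all sufficiently large $N$, $$\mathbb P(V(\Sigma_\infty)>\bar\eta)\le K''e^{-C''N}.$$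
   Context: For a function $f$ of the chain state, $\mathbb E[f(\Sigma_\infty)]$ denotes the long-run average $\lim_{T\to\infty}\frac1T\sum_{t=0}^{T-1}\mathbb E[f(\Sigma_t)]$ (which exists for a finite-state Markov chain, possibly depending on the initial state); in particular $\mathbb P(V(\Sigma_\infty)>\bar\eta)=\lim_{T\to\infty}\frac1T\sum_{t<T}\mathbb P(V(\Sigma_t)>\bar\eta)$. *)

(* Defs.v *)
From HB Require Import structures.
From mathcomp Require Import all_boot all_order all_algebra.
From mathcomp Require Import all_classical all_reals all_analysis.
Set Implicit Arguments. Unset Strict Implicit. Unset Printing Implicit Defensive.
Import Order.TTheory GRing.Theory Num.Theory.
Import numFieldNormedType.Exports.
Local Open Scope classical_set_scope.
Local Open Scope ring_scope.

(* A time-homogeneous Markov chain on a finite state space T is given by an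
   initial distribution mu and a transition matrix P (P s s' = P(Σ_{t+1}=s' | Σ_t=s)). *)
Definition stochastic {R : realType} {T : finType} (P : T -> T -> R) : Prop :=
  (forall s s', 0 <= P s s') /\ (forall s, \sum_(s' : T) P s s' = 1).

Definition is_distribution {R : realType} {T : finType} (mu : T -> R) : Prop :=
  (forall s, 0 <= mu s) /\ \sum_(s : T) mu s = 1.

Fixpoint dist {R : realType} {T : finType} (P : T -> T -> R) (mu : T -> R) (t : nat)
  : T -> R :=
  match t with
  | 0 => mu
  | t'.+1 => fun s' => \sum_(s : T) dist P mu t' s * P s s'
  end.

Definition reachable {R : realType} {T : finType} (P : T -> T -> R) (mu : T -> R) (s : T)
  : Prop := exists t, 0 < dist P mu t s.

Definition cond_exp {R : realType} {T : finType} (P : T -> T -> R) (s : T) (f : T -> R) : R :=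
  \sum_(s' : T) P s s' * f s'.

Definition cond_prob {R : realType} {T : finType} (P : T -> T -> R) (s : T) (A : pred T) : R :=
  \sum_(s' : T | A s') P s s'.

Definition pospart {R : realType} (x : R) : R := Num.max x 0.

Definition cesaro_prob {R : realType} {T : finType} (P : T -> T -> R) (mu : T -> R)
  (A : pred T) (n : nat) : R :=
  (n%:R)^-1 * \sum_(t < n) \sum_(s : T | A s) dist P mu t s.

(* P(Σ_∞ ∈ A) := lim_{T→∞} (1/T) Σ_{t<T} P(Σ_t ∈ A) *)
Definition long_run_prob {R : realType} {T : finType} (P : T -> T -> R) (mu : T -> R)
  (A : pred T) : R :=
  limn (cesaro_prob P mu A : nat -> R).

(* Main.v *)
Require Import Defs.
From HB Require Import structures.
From mathcomp Require Import all_boot all_order all_algebra.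
From mathcomp Require Import all_classical all_reals all_analysis.
From mathcomp Require Import ring lra.
Import Order.TTheory GRing.Theory Num.Theory.
Import numFieldNormedType.Exports.
Local Open Scope ring_scope.

Lemma pospart_cases {R : realType} (x : R) :
  (pospart x = x /\ 0 <= x) \/ (pospart x = 0 /\ x <= 0).
Proof.
rewrite /pospart /Order.max; case: ifP => h.
- by right; split => //; exact: ltW.
- by left; split => //; rewrite leNgt h.
Qed.

Lemma dist_ge0 {R : realType} {T : finType} (P : T -> T -> R) (mu : T -> R) :
  stochastic P -> is_distribution mu -> forall t s, 0 <= dist P mu t s.
Proof.
move=> [P0 _] [m0 _]; elim=> [|t IH] s //=.
by apply: sumr_ge0 => s' _; apply: mulr_ge0.
Qed.

Lemma dist_sum1 {R : realType} {T : finType} (P : T -> T -> R) (mu : T -> R) :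
  stochastic P -> is_distribution mu -> forall t, \sum_s dist P mu t s = 1.
Proof.
move=> [P0 P1] [m0 m1]; elim=> [|t IH] //=.
rewrite exchange_big /= -[RHS]IH; apply: eq_bigr => s _.
by rewrite -mulr_sumr P1 mulr1.
Qed.

Lemma reach_step {R : realType} {T : finType} (P : T -> T -> R) (mu : T -> R) t s s' :
  stochastic P -> is_distribution mu ->
  0 < dist P mu t s -> 0 < P s s' -> 0 < dist P mu t.+1 s'.
Proof.
move=> hP hm hd hp /=.
rewrite (bigD1 s) //=; apply: ltr_wpDr; last exact: mulr_gt0.
apply: sumr_ge0 => i _; apply: mulr_ge0; first exact: dist_ge0.
by case: hP.
Qed.

Lemma cond_exp_le {R : realType} {T : finType} (P : T -> T -> R) s (f g : T -> R) :
  stochastic P -> (forall s', 0 < P s s' -> f s' <= g s') ->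
  cond_exp P s f <= cond_exp P s g.
Proof.
move=> [P0 _] h; apply: ler_sum => s' _.
have := P0 s s'; rewrite le0r => /orP [/eqP -> | hp]; first by rewrite !mul0r.
by rewrite ler_pM2l // h.
Qed.

Lemma cond_exp_lin {R : realType} {T : finType} (P : T -> T -> R) s (f g : T -> R) a b :
  cond_exp P s (fun s' => a * f s' + b * g s') = a * cond_exp P s f + b * cond_exp P s g.
Proof.
rewrite /cond_exp !mulr_sumr -big_split /=; apply: eq_bigr => i _.
by rewrite mulrDr !mulrA ![P s i * _]mulrC.
Qed.

Lemma cond_exp_subc {R : realType} {T : finType} (P : T -> T -> R) s (f : T -> R) x :
  stochastic P -> cond_exp P s (fun s' => f s' - x) = cond_exp P s f - x.
Proof.
move=> [_ P1]; rewrite /cond_exp.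
under eq_bigr do rewrite mulrBr.
by rewrite sumrB -mulr_suml P1 mul1r.
Qed.

Definition Hyps {R : realType} {T : finType} (P : T -> T -> R) (mu : T -> R) (V : T -> R)
  (Vmax eta gamma a b c : R) :=
  forall s : T, reachable P mu s ->
     [/\ 0 <= V s <= Vmax,
         eta < V s ->
           cond_exp P s (fun s' => V s' - V s) <= - gamma /\
           cond_exp P s (fun s' => pospart (V s' - V s)) <= a,
         eta / 2 < V s <= eta ->
           cond_exp P s (fun s' => pospart (V s' - V s)) <= b
       & V s <= eta / 2 ->
           cond_prob P s (fun s' => eta / 2 < V s') <= c].

Lemma drift_bound {R : realType} {T : finType} (P : T -> T -> R) (mu : T -> R) (V : T -> R)
  (Vmax eta gamma a b c : R) t s :
  stochastic P -> is_distribution mu -> 0 < eta -> 0 < gamma -> a <= gamma / 2 ->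
  0 <= b -> 0 <= c -> 0 <= Vmax ->
  Hyps P mu V Vmax eta gamma a b c ->
  0 < dist P mu t s ->
  cond_exp P s (fun s' => pospart (V s' - eta / 2)) - pospart (V s - eta / 2) <=
    (if eta < V s then - (gamma / 4) else 0) + (b + Vmax * c).
Proof.
move=> hP hm he hg ha hb hc hV H hd.
have reach' : forall s', 0 < P s s' -> 0 <= V s' <= Vmax.
  move=> s' hp; have [/andP[] + + _ _ _] := H s' (ex_intro _ t.+1 (@reach_step _ _ P mu t s s' hP hm hd hp)).
  by move=> -> ->.
have [/andP[hV0 hVm] Hhi Hmid Hlo] := H s (ex_intro _ t hd).
have hVc : 0 <= Vmax * c by apply: mulr_ge0.
rewrite -cond_exp_subc //.
case: (ltrP eta (V s)) => h1.
- idtac.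
  have [e1 e2] := Hhi h1.
  have hW : pospart (V s - eta / 2) = V s - eta / 2.
    by case: (pospart_cases (V s - eta / 2)) => -[-> ?] //; lra.
  rewrite hW.
  apply: le_trans (_ : cond_exp P s (fun s' => 1/2 * (V s' - V s) + 1/2 * pospart (V s' - V s)) <= _).
    apply: cond_exp_le => // s' hp; have /andP[h0 hm'] := reach' s' hp.
    case: (pospart_cases (V s' - eta / 2)) => -[-> ?];
    case: (pospart_cases (V s' - V s)) => -[-> ?]; lra.
  rewrite cond_exp_lin; lra.
- idtac.
  case: (ltrP (eta / 2) (V s)) => h2.
  + have hb' := Hmid (introT andP (conj h2 h1)).
    have hW : pospart (V s - eta / 2) = V s - eta / 2.
      by case: (pospart_cases (V s - eta / 2)) => -[-> ?] //; lra.
    rewrite hW.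
    apply: le_trans (_ : cond_exp P s (fun s' => pospart (V s' - V s)) <= _).
      apply: cond_exp_le => // s' hp.
      case: (pospart_cases (V s' - eta / 2)) => -[-> ?];
      case: (pospart_cases (V s' - V s)) => -[-> ?]; lra.
    lra.
  + have hW : pospart (V s - eta / 2) = 0.
      by case: (pospart_cases (V s - eta / 2)) => -[-> ?] //; lra.
    rewrite hW.
    apply: le_trans (_ : cond_exp P s (fun s' => Vmax * (if eta / 2 < V s' then 1 else 0)) <= _).
      apply: cond_exp_le => // s' hp; have /andP[h0 hm'] := reach' s' hp.
      case: ifP => hh.
        by case: (pospart_cases (V s' - eta / 2)) => -[-> ?]; lra.
      move/negbT: hh; rewrite -leNgt => hh.
      by case: (pospart_cases (V s' - eta / 2)) => -[-> ?]; lra.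
    have -> : cond_exp P s (fun s' => Vmax * (if eta / 2 < V s' then 1 else 0)) =
              Vmax * cond_prob P s (fun s' => eta / 2 < V s').
      rewrite /cond_exp /cond_prob mulr_sumr [in RHS]big_mkcond; apply: eq_bigr => i _ /=.
      by case: ifP => _; rewrite ?mulr1 ?mulr0 // mulrC.
    have := ler_wpM2l hV (Hlo h2); lra.
Qed.

Definition EW {R : realType} {T : finType} (P : T -> T -> R) (mu : T -> R) (V : T -> R) (eta : R) t :=
  \sum_s dist P mu t s * pospart (V s - eta / 2).

Definition ph {R : realType} {T : finType} (P : T -> T -> R) (mu : T -> R) (V : T -> R) (eta : R) t :=
  \sum_(s | eta < V s) dist P mu t s.

Lemma EW_step {R : realType} {T : finType} (P : T -> T -> R) (mu : T -> R) (V : T -> R) (eta : R) t :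
  EW P mu V eta t.+1 = \sum_s dist P mu t s * cond_exp P s (fun s' => pospart (V s' - eta / 2)).
Proof.
rewrite /EW /cond_exp /=.
under eq_bigr do rewrite mulr_suml.
rewrite exchange_big /=; apply: eq_bigr => s _; rewrite mulr_sumr.
by apply: eq_bigr => i _; rewrite mulrA.
Qed.

Lemma step_bound {R : realType} {T : finType} (P : T -> T -> R) (mu : T -> R) (V : T -> R)
  (Vmax eta gamma a b c : R) t :
  stochastic P -> is_distribution mu -> 0 < eta -> 0 < gamma -> a <= gamma / 2 ->
  0 <= b -> 0 <= c -> 0 <= Vmax ->
  Hyps P mu V Vmax eta gamma a b c ->
  EW P mu V eta t.+1 - EW P mu V eta t <= - (gamma / 4) * ph P mu V eta t + (b + Vmax * c).
Proof.
move=> hP hm he hg ha hb hc hV H.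
rewrite EW_step /EW -sumrB.
apply: le_trans (_ : \sum_s dist P mu t s * ((if eta < V s then - (gamma / 4) else 0) + (b + Vmax * c)) <= _).
  apply: ler_sum => s _; rewrite -mulrBr.
  have := dist_ge0 P mu hP hm t s; rewrite le0r => /orP [/eqP -> | hd]; first by rewrite !mul0r.
  rewrite ler_pM2l //; exact: (@drift_bound _ _ P mu V Vmax eta gamma a b c t s).
rewrite /ph.
under eq_bigr do rewrite mulrDr.
rewrite big_split /= -mulr_suml (dist_sum1 P mu hP hm) mul1r lerD2r mulr_sumr [in leRHS]big_mkcond /=.
apply: ler_sum => s _; case: ifP => _; rewrite ?mulr0 //.
by rewrite mulrC.
Qed.

Lemma cumul_bound {R : realType} {T : finType} (P : T -> T -> R) (mu : T -> R) (V : T -> R)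
  (Vmax eta gamma a b c : R) n :
  stochastic P -> is_distribution mu -> 0 < eta -> 0 < gamma -> a <= gamma / 2 ->
  0 <= b -> 0 <= c -> 0 <= Vmax ->
  Hyps P mu V Vmax eta gamma a b c ->
  gamma / 4 * \sum_(t < n) ph P mu V eta t + EW P mu V eta n <=
    EW P mu V eta 0 + n%:R * (b + Vmax * c).
Proof.
move=> hP hm he hg ha hb hc hV H.
elim: n => [|n IH]; first by rewrite big_ord0 mulr0 mul0r add0r addr0.
rewrite big_ord_recr /= mulrDr.
have := @step_bound _ _ P mu V Vmax eta gamma a b c n hP hm he hg ha hb hc hV H.
lra.
Qed.

Lemma cesaro_bound {R : realType} {T : finType} (P : T -> T -> R) (mu : T -> R) (V : T -> R)
  (Vmax eta gamma a b c : R) n :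
  stochastic P -> is_distribution mu -> 0 < eta -> 0 < gamma -> a <= gamma / 2 ->
  0 <= b -> 0 <= c -> 0 <= Vmax ->
  Hyps P mu V Vmax eta gamma a b c -> (0 < n)%N ->
  cesaro_prob P mu (fun s => eta < V s) n <= 4 / gamma * (b + Vmax * c) + 4 / gamma * Vmax * n%:R^-1.
Proof.
move=> hP hm he hg ha hb hc hV H hn.
have hc1 := @cumul_bound _ _ P mu V Vmax eta gamma a b c n hP hm he hg ha hb hc hV H.
have hEn : 0 <= EW P mu V eta n.
  apply: sumr_ge0 => s _; apply: mulr_ge0; first exact: (dist_ge0 P mu hP hm).
  by case: (pospart_cases (V s - eta / 2)) => -[-> ?] //; lra.
have hE0 : EW P mu V eta 0 <= Vmax.
  have [m0 m1] := hm.
  apply: le_trans (_ : \sum_s mu s * Vmax <= _); last by rewrite -mulr_suml m1 mul1r.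
  rewrite /EW /=; apply: ler_sum => s _.
  have := m0 s; rewrite le0r => /orP [/eqP -> | hd]; first by rewrite !mul0r.
  rewrite ler_pM2l //.
  have [/andP[h0 h1] _ _ _] := H s (ex_intro _ 0%N hd).
  by case: (pospart_cases (V s - eta / 2)) => -[-> ?]; lra.
rewrite /cesaro_prob.
change (n%:R^-1 * \sum_(t < n) ph P mu V eta t <= 4 / gamma * (b + Vmax * c) + 4 / gamma * Vmax * n%:R^-1).
set X := \sum_(t < n) ph P mu V eta t.
have hX : gamma / 4 * X <= Vmax + n%:R * (b + Vmax * c) by rewrite /X; lra.
clearbody X.
have hnp : 0 < n%:R :> R by rewrite ltr0n.
have hX' : X <= 4 / gamma * (Vmax + n%:R * (b + Vmax * c)).
  rewrite -(ler_pM2l (_ : 0 < gamma / 4)); last by apply: divr_gt0.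
  rewrite mulrA (_ : gamma / 4 * (4 / gamma) = 1) ?mul1r //.
  by field; lra.
rewrite -(ler_pM2l hnp) mulrA mulfV ?mul1r; last by lra.
apply: le_trans hX' _; rewrite le_eqVlt; apply/orP; left; apply/eqP.
field; apply/andP; split; rewrite gt_eqF //; lra.
Qed.

Lemma lim_bound {R : realType} (u : nat -> R) (B D : R) :
  0 <= B -> 0 <= D -> (forall n, (0 < n)%N -> u n <= B + D * n%:R^-1) -> limn u <= B.
Proof.
move=> hB hD hu.
have [cu|ncu] := pselect (cvgn u); last by rewrite (dvgP ncu).
apply/ler_addgt0Pr => e he.
apply: limr_le => //.
exists (Num.trunc (D / e)).+1 => // n /= hn.
have hn0 : (0 < n)%N by apply: leq_trans hn.
have hlt : D / e < n%:R.
  rewrite -truncn_lt_nat; last by apply: divr_ge0 => //; exact: ltW.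
  exact: hn.
have hnp : 0 < n%:R :> R by rewrite ltr0n.
apply: le_trans (hu n hn0) _; rewrite lerD2l.
rewrite ler_pdivrMr //.
move: hlt; rewrite ltr_pdivrMr // => hlt.
rewrite mulrC; exact: ltW.
Qed.

Theorem lemma8 (R : realType) (S : nat -> finType)
  (P : forall N : nat, S N -> S N -> R) (mu : forall N : nat, S N -> R)
  (V : forall N : nat, S N -> R) (Vmax eta gamma C C' K : R) :
  0 < Vmax -> 0 < eta -> 0 < gamma -> 0 < C -> 0 < C' -> 0 < K ->
  (forall N : nat, (0 < N)%N -> stochastic (P N) /\ is_distribution (mu N)) ->
  (forall (N : nat) (s : S N), (0 < N)%N -> reachable (P N) (mu N) s ->
     [/\ 0 <= V N s <= Vmax,
         eta < V N s ->
           cond_exp (P N) s (fun s' => V N s' - V N s) <= - gamma /\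
           cond_exp (P N) s (fun s' => pospart (V N s' - V N s)) <= K / Num.sqrt (N%:R),
         eta / 2 < V N s <= eta ->
           cond_exp (P N) s (fun s' => pospart (V N s' - V N s)) <= K * expR (- (C * N%:R))
       & V N s <= eta / 2 ->
           cond_prob (P N) s (fun s' => eta / 2 < V N s') <= K * expR (- (C' * N%:R))]) ->
  exists C'' K'' : R, 0 < C'' /\
    exists N0 : nat, forall N : nat, (N0 <= N)%N ->
      long_run_prob (P N) (mu N) (fun s => eta < V N s) <= K'' * expR (- (C'' * N%:R)).
Proof.
move=> hVm he hg hC hC' hK hPm H.
set C'' := if C <= C' then C else C'.
have hC''0 : 0 < C'' by rewrite /C''; case: ifP.
have hC''1 : C'' <= C by rewrite /C''; case: ifP => // /negbT; rewrite -ltNge => /ltW.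
have hC''2 : C'' <= C' by rewrite /C''; case: ifP.
exists C'', (4 / gamma * (K * (1 + Vmax))); split => //.
set z := 2 * K / gamma.
have hz : 0 < z by rewrite /z; apply: divr_gt0 => //; apply: mulr_gt0.
exists (Num.trunc (z ^+ 2)).+1 => N hN.
have hN0 : (0 < N)%N by apply: leq_trans hN.
have hlt : z ^+ 2 < N%:R.
  rewrite -truncn_lt_nat; last exact: exprn_ge0 (ltW hz).
  exact: hN.
have [hP hm] := hPm N hN0.
set y := Num.sqrt (N%:R : R).
have hy0 : 0 <= y by apply: sqrtr_ge0.
have hy2 : y ^+ 2 = N%:R by rewrite sqr_sqrtr // ler0n.
have hzy : z < y.
  rewrite ltNge; apply/negP => hyz.
  have : y ^+ 2 <= z ^+ 2 by rewrite ler_pXn2r // ?nnegrE // ltW.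
  lra.
have hy : 0 < y by apply: lt_trans hzy.
have ha : K / y <= gamma / 2.
  rewrite ler_pdivrMr //.
  have hKz : K = z * gamma / 2 by rewrite /z; field; rewrite gt_eqF.
  rewrite hKz; nra.
set e := expR (- (C'' * N%:R)).
set e1 := expR (- (C * N%:R)).
set e2 := expR (- (C' * N%:R)).
have hNr : 0 <= N%:R :> R by rewrite ler0n.
have he1 : e1 <= e by rewrite /e1 /e ler_expR lerN2 ler_wpM2r.
have he2 : e2 <= e by rewrite /e2 /e ler_expR lerN2 ler_wpM2r.
have he1p : 0 < e1 by apply: expR_gt0.
have he2p : 0 < e2 by apply: expR_gt0.
have hb : 0 <= K * e1 by apply: mulr_ge0; apply: ltW.
have hc : 0 <= K * e2 by apply: mulr_ge0; apply: ltW.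
have HH : Hyps (P N) (mu N) (V N) Vmax eta gamma (K / y) (K * e1) (K * e2).
  by move=> s hs; exact: H N s hN0 hs.
have hg4 : 0 < 4 / gamma by apply: divr_gt0.
rewrite /long_run_prob.
apply: le_trans (lim_bound _ (4 / gamma * (K * e1 + Vmax * (K * e2))) (4 / gamma * Vmax) _ _ _) _.
- apply: mulr_ge0; first exact: ltW.
  by apply: addr_ge0 => //; apply: mulr_ge0 => //; apply: ltW.
- by apply: mulr_ge0; apply: ltW.
- move=> n hn.
  have := @cesaro_bound _ _ (P N) (mu N) (V N) Vmax eta gamma (K / y) (K * e1) (K * e2) n
    hP hm he hg ha hb hc (ltW hVm) HH hn.
  by rewrite mulrA.
- apply: le_trans (_ : 4 / gamma * (K * (1 + Vmax) * e) <= _); last by rewrite mulrA.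
  apply: ler_wpM2l; first exact: ltW.
  have h1 : K * e1 <= K * e by rewrite ler_wpM2l // ltW.
  have h2 : Vmax * (K * e2) <= Vmax * (K * e) by rewrite ler_wpM2l ?ler_wpM2l // ltW.
  have -> : K * (1 + Vmax) * e = K * e + Vmax * (K * e) by ring.
  exact: lerD.
Qed.
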